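(* Let $\lambda$ be a CW-labeling of a finite graded poset $P$ with $\hat0$. Then the posets $R_\lambda(P)$ and $Q_\lambda(P)$ are isomorphic.
   Context: C-labelings: a maximal chain is an unrefinable chain from $\hat0$ to a maximal element. A C-labeling assigns to each pair $(\mathbf m,e)$, $\mathbf m$ a maximal chain and $e$ a cover relation of $\mathbf m$, a label in a poset $\Lambda$, such that maximal chains coinciding along their bottom $d$ cover relations have equal labels there (so $\lambda(\mathbf c,x\lessdot y)$ is defined for saturated chains $\mathbf c$ from $\hat0$ containing $x\lessdot y$, or ending at $x$ and extended by $y$). A rooted interval $[x,y]_{\mathbf r}$ is an interval with a saturated chain $\mathbf r$ from $\hat0$ to $x$, a maximal chain $\mathbf c$ of $[x,y]$ being labeled as in $\mathbf r\cup\mathbf c$. Increasing = strictly increasing label word; ascent-free = no consecutive labels $a<b$. CR-labeling: each rooted interval has exactly one increasing maximal chain. Rank two switching property: for every maximal chain $\mathbf m:\hat0=m_0\lessdot\cdots\lessdot m_k$ and $i<k$ with an ascent at rank $i$ there is a unique $m_i'\ne m_i$ such that replacing $m_i$ by $m_i'$ gives a maximal chain with the same labels except that those at ranks $i,i+1$ are swapped, and $m_i'$ is the same for all maximal chains agreeing with $\mathbf m$ in $m_0,\dots,m_{i+1}$ (quadratic exchange $U_i$; identity when there is no ascent; also defined on saturated chains from $\hat0$). CW-labeling: CR-labeling with the rank two switching property such that in each rooted interval distinct ascent-free maximal chains have distinct label words. $Q_\lambda(P)$: $C(P)$ is the set of saturated chains from $\hat0$ ordered by inclusion; $\mathbf c_1\sim_\lambda\mathbf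 c_2$ iff they have the same top element $y$ and are connected by quadratic exchanges (forwards or backwards) among maximal chains of $[\hat0,y]$. $Q_\lambda(P)$ is the set of classes ordered by the transitive closure of: $X\le Y$ if some $\mathbf c\in X$, $\mathbf d\in Y$ have $\mathbf c\subseteq\mathbf d$. $\mathrm{sort}$: for a word $w$ over $\Lambda$, repeatedly replace an adjacent factor $w_iw_{i+1}$ with $w_i<w_{i+1}$ by $w_{i+1}w_i$; this yields a unique ascent-free word $\mathrm{sort}(w)$. $R_\lambda(P)$ is the poset whose elements are pairs $(x,w)$ with $x\in P$ and $w$ the word of labels of an ascent-free saturated chain $\mathbf c$ from $\hat0$ to $x$ (such $\mathbf c$ is determined by $w$), with cover relations $(x,w)\lessdot(y,u)$ whenever $x\lessdot y$ and $u=\mathrm{sort}(w\,\lambda(\mathbf c,x\lessdot y))$, where $\mathbf c$ is the chain determined by $w$ and juxtaposition denotes concatenation; the order is the reflexive-transitive closure of these covers. *)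

(* Defs.v *)
From mathcomp Require Import all_boot all_order.
From Stdlib Require Import Relations.Relation_Operators.
Set Implicit Arguments. Unset Strict Implicit. Unset Printing Implicit Defensive.
Import Order.Theory.
Local Open Scope order_scope.

(* A saturated chain from 0^,  0^ = c_0 <. c_1 <. ... <. c_k, is encoded by
   the seq [:: c_1; ...; c_k] (the bottom element is left implicit), so that
   c_j = nth \bot c (j.-1) for 1 <= j <= k, and its top is last \bot c.
   The cover c_j <. c_{j+1} of a maximal chain m receives label  lam m j
   (0 <= j < size m).  Values of lam outside maximal chains / indices are junk
   and are never used. *)

Section Poset.
Context {d : Order.disp_t} {T : finBPOrderType d}.

Definition covb (x y : T) : bool :=
  (x < y) && [forall z, ~~ ((x < z) && (z < y))].

Definition satch (c : seq T) : bool := path covb \bot c.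
Definition topc (c : seq T) : T := last \bot c.

Definition maxch (c : seq T) : bool := satch c && [forall y, ~~ (topc c < y)].

Definition intchain (x y : T) (dc : seq T) : bool :=
  path covb x dc && (last x dc == y).

(* greedy extension of a chain by covers until a maximal element is reached
   (#|T| steps always suffice): used to read off the labels of a saturated
   chain from 0^ via some maximal chain extending it. *)
Fixpoint extend_fuel (n : nat) (c : seq T) : seq T :=
  match n with
  | 0 => c
  | n'.+1 => match [pick y | covb (topc c) y] with
             | Some y => extend_fuel n' (rcons c y)
             | None => c
             end
  end.
Definition extend (c : seq T) : seq T := extend_fuel #|T| c.

End Poset.

Definition graded {d : Order.disp_t} (T : finBPOrderType d) : Prop :=
  exists n, forall c : seq T, maxch c -> size c = n.

Section Labeling.
Context {d : Order.disp_t} {T : finBPOrderType d}.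
Context {dL : Order.disp_t} {L : porderType dL}.
Variable lam : seq T -> nat -> L.

Definition C_labeling : Prop :=
  forall (m1 m2 : seq T) (k : nat), maxch m1 -> maxch m2 ->
    k <= size m1 -> k <= size m2 -> take k m1 = take k m2 ->
    forall i, i < k -> lam m1 i = lam m2 i.

(* label word of a saturated chain from 0^ (labels taken in any maximal
   chain extending it; well defined for a C-labeling) *)
Definition labs (c : seq T) : seq L := [seq lam (extend c) i | i <- iota 0 (size c)].

Definition increasing (w : seq L) : bool := sorted (fun a b => a < b) w.
Definition ascent_free (w : seq L) : bool := sorted (fun a b => ~~ (a < b)) w.

(* label word of a maximal chain dc of the rooted interval [x,y]_r, x = top r *)
Definition rword (r dc : seq T) : seq L := drop (size r) (labs (r ++ dc)).

Definition CR_labeling : Prop :=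
  C_labeling /\
  forall (r : seq T) (y : T), satch r -> topc r <= y ->
    exists! dc, intchain (topc r) y dc /\ increasing (rword r dc).

(* ascent at rank i (1 <= i < k): lam(m_{i-1} <. m_i) < lam(m_i <. m_{i+1}) *)
Definition ascent_at (m : seq T) (i : nat) : bool :=
  (0 < i < size m) && (lam m i.-1 < lam m i).

Definition switchP (m : seq T) (i : nat) (x : T) : Prop :=
  let m' := set_nth \bot m i.-1 x in
  maxch m' /\ lam m' i.-1 = lam m i /\ lam m' i = lam m i.-1 /\
  forall j, j < size m -> j != i.-1 -> j != i -> lam m' j = lam m j.

Definition rank2_switching : Prop :=
  forall (m : seq T) (i : nat), maxch m -> ascent_at m i ->
    (exists! x, x != nth \bot m i.-1 /\ switchP m i x) /\
    (forall (m2 : seq T) (x x2 : T), maxch m2 -> take i.+1 m2 = take i.+1 m ->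
       x != nth \bot m i.-1 -> switchP m i x ->
       x2 != nth \bot m2 i.-1 -> switchP m2 i x2 -> x = x2).

Definition CW_labeling : Prop :=
  CR_labeling /\ rank2_switching /\
  forall (r : seq T) (y : T) (d1 d2 : seq T), satch r ->
    intchain (topc r) y d1 -> intchain (topc r) y d2 ->
    ascent_free (rword r d1) -> ascent_free (rword r d2) ->
    d1 <> d2 -> rword r d1 <> rword r d2.

Definition qstep (c c' : seq T) : Prop :=
  exists (m : seq T) (i : nat) (x : T),
    maxch m /\ c = take (size c) m /\ ascent_at m i /\ i < size c /\
    x != nth \bot m i.-1 /\ switchP m i x /\ c' = set_nth \bot c i.-1 x.

Definition qstep_in (y : T) (a b : seq T) : Prop :=
  qstep a b /\ topc a = y /\ topc b = y.

Definition simQ (c1 c2 : seq T) : Prop :=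
  satch c1 /\ satch c2 /\ topc c1 = topc c2 /\
  clos_refl_sym_trans (seq T) (qstep_in (topc c1)) c1 c2.

(* [c] <= [d] in Q_lambda(P), expressed on representatives *)
Definition qbase (c e : seq T) : Prop :=
  exists c0 e0, simQ c c0 /\ simQ e e0 /\ satch c0 /\ satch e0 /\
                {subset c0 <= e0}.
Definition qle (c e : seq T) : Prop := clos_refl_trans (seq T) qbase c e.

Definition swapstep (w u : seq L) : Prop :=
  exists (a b : seq L) (x y : L), x < y /\ w = a ++ x :: y :: b /\ u = a ++ y :: x :: b.

Definition is_sort (w u : seq L) : Prop :=
  clos_refl_trans (seq L) swapstep w u /\ ascent_free u.

Definition isR (p : T * seq L) : Prop :=
  exists c, satch c /\ topc c = p.1 /\ ascent_free (labs c) /\ labs c = p.2.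

(* (x,w) <. (y,u): here drop (size c) (labs (rcons c y)) = [:: lam(c, x <. y)] *)
Definition rcov (p q : T * seq L) : Prop :=
  isR p /\ isR q /\ covb p.1 q.1 /\
  exists c, satch c /\ topc c = p.1 /\ ascent_free (labs c) /\ labs c = p.2 /\
            is_sort (p.2 ++ drop (size c) (labs (rcons c q.1))) q.2.

Definition rle (p q : T * seq L) : Prop := clos_refl_trans (T * seq L) rcov p q.

(* Q_lambda(P) ~= R_lambda(P): a map f from C(P) whose fibres are exactly the
   ~_lambda classes, onto R_lambda(P), preserving and reflecting the order;
   i.e. f induces an order isomorphism of the quotient Q_lambda(P) onto R_lambda(P). *)
Definition Q_R_isomorphic : Prop :=
  exists f : seq T -> T * seq L,
    (forall c, satch c -> isR (f c)) /\
    (forall p, isR p -> exists c, satch c /\ f c = p) /\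
    (forall c1 c2, satch c1 -> satch c2 -> (f c1 = f c2 <-> simQ c1 c2)) /\
    (forall c1 c2, satch c1 -> satch c2 -> (qle c1 c2 <-> rle (f c1) (f c2))).

End Labeling.

(* Main.v *)
Require Import Defs.
From mathcomp Require Import all_boot all_order.
From mathcomp Require Import zify.
From Stdlib Require Import Relations.Relation_Operators Relations.Operators_Properties ClassicalEpsilon.
Set Implicit Arguments. Unset Strict Implicit. Unset Printing Implicit Defensive.
Import Order.Theory.
Local Open Scope order_scope.

Section Words.
Context {dL : Order.disp_t} {L : porderType dL}.
Notation crt := (clos_refl_trans (seq L) (@swapstep _ L)).

Fixpoint inv (w : seq L) : nat :=
  match w with [::] => 0%N | x :: s => (count (fun y => (x < y)%O) s + inv s)%N end.

Lemma swapstepI a b (x y : L) : x < y -> swapstep (a ++ x :: y :: b) (a ++ y :: x :: b).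
Proof. by move=> h; exists a, b, x, y. Qed.

Lemma swapstep_inv (w u : seq L) : swapstep w u -> (inv u < inv w)%N.
Proof.
case=> a [b [x [y [h [-> ->]]]]].
elim: a => [|z a IH] /=.
  rewrite h. have -> : (y < x) = false by apply/negbTE; rewrite lt_gtF.
  rewrite /=. lia.
rewrite !count_cat /=. lia.
Qed.

Lemma swapstep_size (w u : seq L) : swapstep w u -> size u = size w.
Proof. by case=> a [b [x [y [h [-> ->]]]]]; rewrite !size_cat. Qed.

Lemma not_af_step (w : seq L) : ~~ ascent_free w -> exists u, swapstep w u.
Proof.
elim: w => [|x s IH] //.
case: s IH => [|y s] IH //=.
rewrite negb_and negbK; case/orP => [h|h].
  by exists (y :: x :: s); apply: (swapstepI [::]).
have [u [a [b [x' [y' [h1 [e1 e2]]]]]]] := IH h.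
exists (x :: u); exists (x :: a), b, x', y'; by rewrite e1 e2.
Qed.

Lemma af_nostep (w u : seq L) : ascent_free w -> swapstep w u -> False.
Proof.
move=> haf [a [b [x [y [h [ew _]]]]]]; subst w.
elim: a haf => [|z a IH] /=.
  by rewrite h.
by move/path_sorted.
Qed.

Lemma crt_cons (z : L) (u v : seq L) : crt u v -> crt (z :: u) (z :: v).
Proof.
elim=> [u' v' [a [b [x [y [h [-> ->]]]]]]| u' | u' v' w' _ IH1 _ IH2].
- by apply: rt_step; apply: (swapstepI (z :: a)).
- exact: rt_refl.
- exact: rt_trans IH1 IH2.
Qed.

Lemma lc_nil (x y : L) b a' x' y' b' : x < y -> x' < y' ->
  x :: y :: b = a' ++ x' :: y' :: b' ->
  exists z, crt (y :: x :: b) z /\ crt (a' ++ y' :: x' :: b') z.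
Proof.
move=> h h'.
case: a' => [|z1 [|z2 a'']] /=.
- by case=> -> -> ->; exists (y' :: x' :: b'); split; apply: rt_refl.
- case=> e1 e2 e3; subst z1 x' b.
  exists (y' :: y :: x :: b'); split.
  + apply: rt_trans (_ : crt _ (y :: y' :: x :: b')) _.
      by apply: rt_step; apply: (swapstepI [:: y]); exact: lt_trans h'.
    by apply: rt_step; apply: (swapstepI [::]).
  + apply: rt_trans (_ : crt _ (y' :: x :: y :: b')) _.
      by apply: rt_step; apply: (swapstepI [::]); exact: lt_trans h'.
    by apply: rt_step; apply: (swapstepI [:: y']).
- case=> e1 e2 e3; subst z1 z2 b.
  exists (y :: x :: a'' ++ y' :: x' :: b'); split.
  + by apply: rt_step; apply: (swapstepI [:: y, x & a'']).
  + by apply: rt_step; apply: (swapstepI [::]).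
Qed.

Lemma local_conf (w u v : seq L) : swapstep w u -> swapstep w v ->
  exists z, crt u z /\ crt v z.
Proof.
case=> a [b [x [y [h [-> ->]]]]] [a' [b' [x' [y' [h' [e ->]]]]]].
elim: a a' e => [|z0 a IH] a' e.
  exact: lc_nil e.
case: a' e => [|z1 a'] /= e.
  have [z [h1 h2]] := lc_nil (a' := z0 :: a) h' h (esym e).
  by exists z.
case: e => ez e; subst z1.
have [z [h1 h2]] := IH _ e.
by exists (z0 :: z); split; apply: crt_cons.
Qed.

Lemma nf_exists (w : seq L) : exists u, crt w u /\ ascent_free u.
Proof.
elim: {w}(inv w).+1 {-2}w (ltnSn (inv w)) => [|n IH] w hw //.
case haf: (ascent_free w).
  by exists w; split => //; apply: rt_refl.
have [u hu] := not_af_step (negbT haf).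
have [v [h1 h2]] := IH u (leq_trans (swapstep_inv hu) (hw : (inv w < n.+1)%N)).
by exists v; split => //; apply: rt_trans (rt_step _ _ _ _ hu) h1.
Qed.

Lemma nf_unique (w u v : seq L) : crt w u -> crt w v -> ascent_free u -> ascent_free v -> u = v.
Proof.
elim: {w}(inv w).+1 {-2}w (ltnSn (inv w)) u v => [|n IH] w hw u v //.
move=> hu0 hv0 au av.
have hu := clos_rt_rt1n _ _ _ _ hu0; have hv := clos_rt_rt1n _ _ _ _ hv0; clear hu0 hv0.
case: hu au => [|w1 u' s1 r1] au.
  case: hv av => [|w2 v' s2 r2] av //.
  by case: (af_nostep au s2).
case: hv av => [|w2 v' s2 r2] av.
  by case: (af_nostep av s1).
have [z [z1 z2]] := local_conf s1 s2.
have [z' [z3 az']] := nf_exists z.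
have lt1 := leq_trans (swapstep_inv s1) (hw : (inv w < n.+1)%N).
have lt2 := leq_trans (swapstep_inv s2) (hw : (inv w < n.+1)%N).
rewrite (IH w1 lt1 u' z' (clos_rt1n_rt _ _ _ _ r1) (rt_trans _ _ _ _ _ z1 z3) au az').
by rewrite (IH w2 lt2 v' z' (clos_rt1n_rt _ _ _ _ r2) (rt_trans _ _ _ _ _ z2 z3) av az').
Qed.



Lemma rst_nf (w w' : seq L) : clos_refl_sym_trans (seq L) (@swapstep _ L) w w' ->
  forall u, (crt w u /\ ascent_free u) <-> (crt w' u /\ ascent_free u).
Proof.
elim=> [x y s | x | x y _ IH | x y z _ IH1 _ IH2] u.
- split=> [[h a]|[h a]]; last by split => //; apply: rt_trans (rt_step _ _ _ _ s) h.
  have [u' [h' a']] := nf_exists y.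
  by rewrite (nf_unique h (rt_trans _ _ _ _ _ (rt_step _ _ _ _ s) h') a a').
- by [].
- by rewrite IH.
- by rewrite IH1 IH2.
Qed.

Lemma af_nf (w : seq L) : ascent_free w -> crt w w /\ ascent_free w.
Proof. by move=> a; split => //; apply: rt_refl. Qed.

Lemma rst_af (w w' : seq L) : clos_refl_sym_trans (seq L) (@swapstep _ L) w w' ->
  ascent_free w -> ascent_free w' -> w = w'.
Proof.
move=> h a a'.
have := (rst_nf h w).1 (af_nf a) => -[h1 _].
apply: esym; apply: (nf_unique (rt_refl _ _ _) h1 a' a).
Qed.

End Words.
Section SeqAux.
Context {A : Type}.

Lemma take_set_nth (x0 : A) (s : seq A) n k v : (k < n)%N -> (n <= size s)%N ->
  take n (set_nth x0 s k v) = set_nth x0 (take n s) k v.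
Proof.
elim: s n k => [|a s IH] [|n] [|k] //=; try lia.
by move=> h1 h2; rewrite IH.
Qed.

Lemma last_set_nth (x0 y0 : A) (s : seq A) k v : (k.+1 < size s)%N ->
  last y0 (set_nth x0 s k v) = last y0 s.
Proof.
elim: s k y0 => [|a s IH] [|k] y0 //=.
  by case: s IH.
by move=> h; rewrite IH.
Qed.

Lemma set_nth_rcons (x0 : A) (s : seq A) y k v : (k < size s)%N ->
  set_nth x0 (rcons s y) k v = rcons (set_nth x0 s k v) y.
Proof.
elim: s k => [|a s IH] [|k] //= h.
by rewrite IH.
Qed.

Lemma take_size_le (s t : seq A) : take (size s) t = s -> (size s <= size t)%N.
Proof. by move=> e; rewrite -{1}e size_take_min geq_minr. Qed.

Lemma nth_cat2 (x0 : A) a (x y : A) b :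
  nth x0 (a ++ x :: y :: b) (size a) = x /\ nth x0 (a ++ x :: y :: b) (size a).+1 = y.
Proof. by elim: a. Qed.

End SeqAux.

Lemma swapstep_nth {dL : Order.disp_t} {L : porderType dL} (x0 : L) (w u : seq L) k :
  (k.+1 < size w)%N -> size u = size w -> nth x0 w k < nth x0 w k.+1 ->
  nth x0 u k = nth x0 w k.+1 -> nth x0 u k.+1 = nth x0 w k ->
  (forall j, j != k -> j != k.+1 -> nth x0 u j = nth x0 w j) -> swapstep w u.
Proof.
move=> hk hs hlt h1 h2 h3.
have ew : w = take k w ++ nth x0 w k :: nth x0 w k.+1 :: drop k.+2 w.
  by rewrite -{1}(cat_take_drop k w) (@drop_nth _ x0 k w (ltnW hk)) (@drop_nth _ x0 k.+1 w hk).
have eu : u = take k u ++ nth x0 u k :: nth x0 u k.+1 :: drop k.+2 u.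
  by rewrite -{1}(cat_take_drop k u) (@drop_nth _ x0 k u) ?hs ?(ltnW hk) // (@drop_nth _ x0 k.+1 u) ?hs.
have et : take k u = take k w.
  apply: (eq_from_nth (x0 := x0)); first by rewrite !size_take_min hs.
  move=> j; rewrite size_take_min => hj.
  have hjk : (j < k)%N by move: hj; rewrite leq_min => /andP[].
  rewrite !nth_take // h3 //; rewrite neq_ltn ?hjk //.
  by rewrite (ltn_trans hjk).
have ed : drop k.+2 u = drop k.+2 w.
  apply: (eq_from_nth (x0 := x0)); first by rewrite !size_drop hs.
  move=> j _; rewrite !nth_drop h3 //; rewrite neq_ltn; apply/orP; right; lia.
exists (take k w), (drop k.+2 w), (nth x0 w k), (nth x0 w k.+1).
split => //; split => //.
by rewrite eu et ed h1 h2.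
Qed.

Section Chains.
Context {d : Order.disp_t} {T : finBPOrderType d}.

Lemma covb_lt (x y : T) : covb x y -> x < y.
Proof. by case/andP. Qed.

Lemma satch_lt_gen (b : T) (c : seq T) : path covb b c -> path <%O b c.
Proof. by apply: sub_path => a a'; exact: covb_lt. Qed.

Lemma satch_lt (c : seq T) : satch c -> path <%O \bot c.
Proof. exact: satch_lt_gen. Qed.

Lemma satch_size (c : seq T) : satch c -> (size c < #|T|)%N.
Proof.
move=> sc.
have u : uniq (\bot :: c).
  by apply: (sorted_uniq lt_trans ltxx); exact: satch_lt sc.
have := max_card (mem (\bot :: c)); rewrite (card_uniqP u) /=. by [].
Qed.

Lemma exists_cover (x y : T) : x < y -> exists z, covb x z.
Proof.
move: (ltnSn #|[set z | (x < z) && (z < y)]|).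
move: {2}(#|_|.+1) => n; elim: n y => [|n IH] y hn hxy //.
have [hc|hc] := boolP [forall z, ~~ ((x < z) && (z < y))].
  by exists y; rewrite /covb hxy hc.
move: hc; rewrite negb_forall => /existsP [z]; rewrite negbK => /andP [h1 h2].
apply: (IH z _ h1).
have hp : [set w | (x < w) && (w < z)] \proper [set w | (x < w) && (w < y)].
  apply/properP; split.
    apply/subsetP => w; rewrite !inE => /andP [a b]; by rewrite a (lt_trans b h2).
  by exists z; rewrite !inE ?h1 ?h2 ?ltxx ?andbF.
have := proper_card hp; lia.
Qed.

Lemma extend_fuel_spec n (c : seq T) : satch c -> (#|T| <= size c + n)%N ->
  maxch (extend_fuel n c) /\ exists s, extend_fuel n c = c ++ s.
Proof.
elim: n c => [|n IH] c sc hn /=.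
  by have := satch_size sc; lia.
case: pickP => [y hy | hnone].
  have sc' : satch (rcons c y) by rewrite /satch rcons_path; apply/andP; split.
  have hn' : (#|T| <= size (rcons c y) + n)%N by rewrite size_rcons; lia.
  have [m [s e]] := IH _ sc' hn'.
  split => //; exists (y :: s); by rewrite e cat_rcons.
split; last by exists [::]; rewrite cats0.
rewrite /maxch sc /=; apply/forallP => y; apply/negP => hy.
have [z hz] := exists_cover hy.
by have := hnone z; rewrite hz.
Qed.

Lemma extend_spec (c : seq T) : satch c -> maxch (extend c) /\ take (size c) (extend c) = c.
Proof.
move=> sc; have [m [s e]] := extend_fuel_spec (n := #|T|) sc (leq_addl _ _).
by split => //; rewrite /extend e take_size_cat.
Qed.

Lemma maxch_satch (m : seq T) : maxch m -> satch m.
Proof. by case/andP. Qed.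

Lemma satch_take n (c : seq T) : satch c -> satch (take n c).
Proof. exact: take_path. Qed.

Lemma prefix_sub_gen (b : T) (c e : seq T) : path covb b c -> path covb b e ->
  {subset c <= e} -> exists s, e = c ++ s.
Proof.
elim: c b e => [|x c IH] b e /=.
  by move=> _ _ _; exists e.
case/andP=> hbx pc.
case: e => [|y e] /=.
  by move=> _ /(_ x); rewrite inE eqxx => /(_ isT).
case/andP=> hby pe sub.
have exy : x = y.
  have := sub x; rewrite !inE eqxx => /(_ isT) /orP [/eqP //|hx].
  have := order_path_min lt_trans (satch_lt_gen pe) => /allP /(_ x hx) hyx.
  move: hbx => /andP [_ /forallP /(_ y)]; by rewrite (covb_lt hby) hyx.
subst y.
have sub' : {subset c <= e}.
  move=> z hz; have := sub z; rewrite inE hz orbT => /(_ isT); rewrite inE => /orP [/eqP ezx|//].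
  have := order_path_min lt_trans (satch_lt_gen pc) => /allP /(_ z hz).
  by rewrite ezx ltxx.
have [s es] := IH x e pc pe sub'.
by exists s; rewrite es.
Qed.

Lemma prefix_sub (c e : seq T) : satch c -> satch e -> {subset c <= e} -> exists s, e = c ++ s.
Proof. exact: prefix_sub_gen. Qed.
End Chains.

Section Lab.
Context {d : Order.disp_t} {T : finBPOrderType d}.
Context {dL : Order.disp_t} {L : porderType dL}.
Variable lam : seq T -> nat -> L.
Hypothesis HC : C_labeling lam.

Lemma lab_pref (c m : seq T) j : maxch m -> c = take (size c) m -> (j < size c)%N ->
  lam m j = lam (extend c) j.
Proof.
move=> mm ec hj.
have sc : satch c by rewrite ec; apply: satch_take; exact: maxch_satch.
have [me te] := extend_spec sc.
apply: (HC mm me (k := size c)) => //.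
- exact: take_size_le (esym ec).
- exact: take_size_le te.
- by rewrite te -ec.
Qed.

Lemma size_labs (c : seq T) : size (labs lam c) = size c.
Proof. by rewrite /labs size_map size_iota. Qed.

Lemma nth_labs x0 (c : seq T) j : (j < size c)%N -> nth x0 (labs lam c) j = lam (extend c) j.
Proof. by move=> hj; rewrite /labs (nth_map 0%N) ?size_iota // nth_iota. Qed.

Lemma labs_take (e : seq T) n : satch e -> labs lam (take n e) = take n (labs lam e).
Proof.
move=> se; have [me te] := extend_spec se.
apply: (eq_from_nth (x0 := lam [::] 0%N)).
  by rewrite size_labs !size_take_min size_labs.
move=> j; rewrite size_labs => hj.
have hj' : (j < n)%N /\ (j < size e)%N.
  by move: hj; rewrite size_take_min leq_min => /andP[].
rewrite nth_labs // nth_take; last by case: hj'.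
rewrite nth_labs; last by case: hj'.
symmetry; apply: lab_pref => //.
rewrite size_take_min.
case: (leqP n (size e)) => h.
  by rewrite -{1}te take_takel.
by rewrite te take_oversize // ltnW.
Qed.

Lemma qstep_props (c c' : seq T) : qstep lam c c' ->
  [/\ satch c, satch c', topc c' = topc c & swapstep (labs lam c) (labs lam c')].
Proof.
case=> m [i [x [mm [ec [asc [ic [xn [sw ec']]]]]]]].
move: sw; rewrite /switchP /=; set m' := set_nth _ m _ x => -[mm' [l1 [l2 l3]]].
move: asc; rewrite /ascent_at => /andP [/andP [i0 im] hlt].
have cm : (size c <= size m)%N by apply: take_size_le; rewrite -ec.
have sc : satch c by rewrite ec; apply: satch_take; exact: maxch_satch.
have ki : i.-1.+1 = i by rewrite prednK.
have ic' : (i < size c)%N := ic.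
have i0' : (0 < i)%N := i0.
have ec'' : c' = take (size c) m'.
  rewrite ec' /m' take_set_nth //; first by rewrite -ec.
  by rewrite -ki in ic; exact: ltnW ic.
have sc' : satch c' by rewrite ec''; apply: satch_take; exact: maxch_satch.
have szc' : size c' = size c by rewrite ec' size_set_nth; apply/maxn_idPr; rewrite ki; exact: ltnW.
split => //.
  by rewrite /topc ec' last_set_nth // ki.
have ec3 : c' = take (size c') m' by rewrite szc'.
have x0 : L := lam [::] 0%N.
have hw : forall j, (j < size c)%N -> nth x0 (labs lam c) j = lam m j.
  by move=> j hj; rewrite nth_labs // (lab_pref mm ec hj).
have hu : forall j, (j < size c)%N -> nth x0 (labs lam c') j = lam m' j.
  by move=> j hj; rewrite nth_labs ?szc' // -(lab_pref mm' ec3) ?szc'.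
apply: (swapstep_nth (x0 := x0) (k := i.-1)).
- by rewrite size_labs ki.
- by rewrite !size_labs.
- by rewrite hw ?hw ki //; exact: ltnW ic.
- by rewrite hu ?hw ki //; exact: ltnW ic.
- rewrite ki hu ?hw ?l2 //; lia.
- move=> j h1 h2; case: (ltnP j (size c)) => hj.
    by rewrite hu ?hw // l3 //; [exact: leq_trans hj cm | rewrite -ki].
  by rewrite !nth_default ?size_labs ?szc'.
Qed.

Hypothesis HS : rank2_switching lam.

Lemma qstep_rcons (a b : seq T) y : qstep lam a b -> covb (topc a) y ->
  qstep lam (rcons a y) (rcons b y).
Proof.
move=> q hy; have [sa _ _ _] := qstep_props q.
case: q => m [i [x [mm [ea [asc [ia [xn [sw eb]]]]]]]].
have sa' : satch (rcons a y) by rewrite /satch rcons_path; apply/andP; split.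
have [m2m te] := extend_spec sa'.
set m2 := extend (rcons a y) in m2m te.
have ia' : (i < size a)%N := ia.
have t1 : take (size a).+1 m2 = rcons a y by rewrite -te size_rcons.
have am2 : a = take (size a) m2.
  by rewrite -(@take_takel _ (size a) (size a).+1 m2 (leqnSn _)) t1 -cats1 take_size_cat.
have hl : forall j, (j < size a)%N -> lam m2 j = lam m j.
  by move=> j hj; rewrite (lab_pref m2m am2 hj) (lab_pref mm ea hj).
have asc0 := asc.
move: asc => /andP [/andP [i0 im] hlt].
have i0' : (0 < i)%N := i0.
have sm2 : (size (rcons a y) <= size m2)%N by apply: take_size_le.
have asc2 : ascent_at lam m2 i.
  rewrite /ascent_at hl ?hl //; last by lia.
  apply/andP; split => //; apply/andP; split => //.
  by move: sm2; rewrite size_rcons => h; change (i < size m2)%N; lia.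
have [[x2 [[x2n sw2] _]] _] := HS m2m asc2.
have [_ uniq2] := HS mm asc0.
have ex : x = x2.
  apply: (uniq2 m2 x x2 m2m _ xn sw x2n sw2).
  rewrite -(@take_takel _ i.+1 (size a) m2 ia') -am2.
  by rewrite -(@take_takel _ i.+1 (size a) m ia') -ea.
subst x2.
exists m2, i, x; split => //; split; first by rewrite te.
split => //; split; first by rewrite size_rcons; change (i < (size a).+1)%N; lia.
split => //; split => //.
by rewrite eb set_nth_rcons //; exact: leq_ltn_trans (leq_pred i) ia'.
Qed.

Lemma simQ_refl (c : seq T) : satch c -> simQ lam c c.
Proof. by move=> s; split => //; split => //; split => //; exact: rst_refl. Qed.

Lemma simQ_sym (c1 c2 : seq T) : simQ lam c1 c2 -> simQ lam c2 c1.
Proof.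
case=> s1 [s2 [e h]]; split => //; split => //; split => //.
by rewrite -e; exact: rst_sym.
Qed.

Lemma simQ_trans (c1 c2 c3 : seq T) : simQ lam c1 c2 -> simQ lam c2 c3 -> simQ lam c1 c3.
Proof.
case=> s1 [s2 [e12 h12]] [_ [s3 [e23 h23]]]; split => //; split => //; split.
  by rewrite e12.
by apply: rst_trans h12 _; rewrite e12.
Qed.

Lemma simQ_top (c1 c2 : seq T) : simQ lam c1 c2 -> topc c1 = topc c2.
Proof. by case=> _ [_ []]. Qed.

Lemma simQ_satch (c1 c2 : seq T) : simQ lam c1 c2 -> satch c1 /\ satch c2.
Proof. by case=> ? [? _]. Qed.

Lemma simQ_labs (c1 c2 : seq T) : simQ lam c1 c2 ->
  clos_refl_sym_trans (seq L) (@swapstep _ L) (labs lam c1) (labs lam c2).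
Proof.
case=> _ [_ [_ h]]; elim: h => [a b [q _] | a | a b _ IH | a b c _ IH1 _ IH2].
- by apply: rst_step; case: (qstep_props q).
- exact: rst_refl.
- exact: rst_sym.
- exact: rst_trans IH1 IH2.
Qed.

Lemma simQ_rcons (c1 c2 : seq T) y : simQ lam c1 c2 -> covb (topc c1) y ->
  simQ lam (rcons c1 y) (rcons c2 y).
Proof.
case=> s1 [s2 [e h]] hy.
have sr : forall c, satch c -> topc c = topc c1 -> satch (rcons c y).
  by move=> c sc tc; rewrite /satch rcons_path; apply/andP; split => //; move: hy; rewrite -tc.
split; first exact: sr.
split; first by apply: sr => //; rewrite e.
split; first by rewrite /topc !last_rcons.
rewrite {1}/topc last_rcons.
move: hy; set t := topc c1 => hy.
elim: h => [a b [q [ta tb]] | a | a b _ IH | a b c _ IH1 _ IH2].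
- apply: rst_step; split; first by apply: qstep_rcons q _; rewrite ta.
  by rewrite /topc !last_rcons.
- exact: rst_refl.
- exact: rst_sym.
- exact: rst_trans IH1 IH2.
Qed.

Lemma af_exists (c : seq T) : satch c -> exists c', simQ lam c c' /\ ascent_free (labs lam c').
Proof.
elim: {c}(inv (labs lam c)).+1 {-2}c (ltnSn (inv (labs lam c))) => [|n IH] c hn sc //.
case haf: (ascent_free (labs lam c)).
  by exists c; split => //; exact: simQ_refl.
have [u [a [b [x [y [hxy [ew _]]]]]]] := not_af_step (negbT haf).
set k := size a.
have hk : (k.+1 < size c)%N by rewrite -(size_labs c) ew size_cat /= /k; lia.
have [me te] := extend_spec sc.
set m := extend c in me te.
have [ex ey] := nth_cat2 x a x y b.
have lk : lam m k = x by rewrite -ex -ew nth_labs //; lia.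
have lk1 : lam m k.+1 = y by rewrite -ey -ew nth_labs.
have sm : (size c <= size m)%N by apply: take_size_le.
have asc : ascent_at lam m k.+1.
  rewrite /ascent_at /= lk lk1 hxy andbT.
  by change (k.+1 < size m)%N; lia.
have [[x' [[xn sw] _]] _] := HS me asc.
set c'' := set_nth \bot c k x'.
have q : qstep lam c c''.
  exists m, k.+1, x'; split; first exact: me.
  split; first by rewrite te.
  split; first exact: asc.
  split; first exact: hk.
  by split.
have [_ sc'' tc'' sw''] := qstep_props q.
have hlt : (inv (labs lam c'') < n)%N.
  have := swapstep_inv sw''; have : (inv (labs lam c) < n.+1)%N := hn; lia.
have [c3 [h3 a3]] := IH c'' hlt sc''.
exists c3; split => //.
apply: simQ_trans h3.
split => //; split => //; split; first by rewrite tc''.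
by apply: rst_step; split.
Qed.

Definition af (c : seq T) : seq T :=
  epsilon (inhabits c) (fun c' => simQ lam c c' /\ ascent_free (labs lam c')).

Lemma af_spec (c : seq T) : satch c -> simQ lam c (af c) /\ ascent_free (labs lam (af c)).
Proof. by move=> sc; exact: (epsilon_spec (inhabits c) _ (af_exists sc)). Qed.

Definition fR (c : seq T) : T * seq L := (topc c, labs lam (af c)).

Lemma labs_af (c : seq T) : satch c -> ascent_free (labs lam c) -> labs lam (af c) = labs lam c.
Proof.
move=> sc hc; have [h a] := af_spec sc.
by apply: esym; apply: rst_af (simQ_labs h) hc a.
Qed.

Hypothesis HD : forall (r : seq T) (y : T) (d1 d2 : seq T), satch r ->
    intchain (topc r) y d1 -> intchain (topc r) y d2 ->
    ascent_free (rword lam r d1) -> ascent_free (rword lam r d2) ->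
    d1 <> d2 -> rword lam r d1 <> rword lam r d2.

Lemma fR_fibre (c1 c2 : seq T) : satch c1 -> satch c2 -> (fR c1 = fR c2 <-> simQ lam c1 c2).
Proof.
move=> s1 s2; have [h1 a1] := af_spec s1; have [h2 a2] := af_spec s2.
split.
- case=> et el.
  have rw : forall dd, rword lam [::] dd = labs lam dd by move=> dd; rewrite /rword drop0.
  have e12 : af c1 = af c2.
    case: (eqVneq (af c1) (af c2)) => // hne.
    exfalso; apply: (HD (r := [::]) (y := topc c1) _ _ _ _ _ (elimN eqP hne)); rewrite ?rw //.
    + rewrite /intchain; apply/andP; split; first by case: (simQ_satch h1).
      by rewrite -/(topc (af c1)) -(simQ_top h1).
    + rewrite /intchain; apply/andP; split; first by case: (simQ_satch h2).
      by rewrite -/(topc (af c2)) -(simQ_top h2) et.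
  apply: simQ_trans h1 _; rewrite e12; exact: simQ_sym.
- move=> h; rewrite /fR (simQ_top h); congr pair.
  apply: rst_af a1 a2.
  exact: rst_trans (rst_sym _ _ _ _ (simQ_labs h1)) (rst_trans _ _ _ _ _ (simQ_labs h) (simQ_labs h2)).
Qed.

Lemma isR_fR (c : seq T) : satch c -> isR lam (fR c).
Proof.
move=> sc; have [h a] := af_spec sc.
exists (af c); split; first by case: (simQ_satch h).
by rewrite /fR /= (simQ_top h).
Qed.

Lemma fR_surj p : isR lam p -> exists c, satch c /\ fR c = p.
Proof.
case: p => t w [c [sc [tc [ac lc]]]]; exists c; split => //.
by rewrite /fR labs_af // tc lc.
Qed.

Lemma rcov_step (p : seq T) y : satch (rcons p y) -> rcov lam (fR p) (fR (rcons p y)).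
Proof.
move=> spy; move: (spy); rewrite /satch rcons_path => /andP [sp hy].
have [hp ap] := af_spec sp.
have tp : topc (af p) = topc p by rewrite (simQ_top hp).
have sap : satch (af p) by case: (simQ_satch hp).
have sq : satch (rcons (af p) y).
  by rewrite /satch rcons_path; apply/andP; split => //; rewrite -/(topc (af p)) tp.
split; first exact: isR_fR.
split; first exact: isR_fR.
split; first by rewrite /= /topc last_rcons.
exists (af p); split => //; split => //; split => //; split => //.
rewrite /= {1}/topc last_rcons.
have e1 : labs lam (af p) = take (size (af p)) (labs lam (rcons (af p) y)).
  by rewrite -labs_take // -cats1 take_size_cat.
rewrite {1}e1 cat_take_drop.
have [hpy apy] := af_spec spy.
have hs : simQ lam (rcons (af p) y) (af (rcons p y)).
  apply: simQ_trans hpy; apply: simQ_rcons; first exact: simQ_sym.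
  by rewrite tp.
split => //.
by case: ((rst_nf (simQ_labs hs) _).2 (af_nf apy)).
Qed.

Lemma rle_ext (c s : seq T) : satch (c ++ s) -> rle lam (fR c) (fR (c ++ s)).
Proof.
elim/last_ind: s => [|s y IH] h.
  by rewrite cats0; exact: rt_refl.
rewrite -rcons_cat in h *.
apply: rt_trans (IH _) (rt_step _ _ _ _ (rcov_step h)).
by move: h; rewrite /satch rcons_path => /andP [].
Qed.

Lemma qle_rle (c1 c2 : seq T) : qle lam c1 c2 -> rle lam (fR c1) (fR c2).
Proof.
elim => [a b [c0 [e0 [h1 [h2 [s0 [s1 sub]]]]]] | a | a b c _ IH1 _ IH2].
- have [s es] := prefix_sub s0 s1 sub.
  have [sa _] := simQ_satch h1; have [sb _] := simQ_satch h2.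
  rewrite ((fR_fibre sa s0).2 h1) ((fR_fibre sb s1).2 h2) es.
  by apply: rle_ext; rewrite -es.
- exact: rt_refl.
- exact: rt_trans IH1 IH2.
Qed.

Lemma rcov_qbase (c1 c2 : seq T) : satch c1 -> satch c2 -> rcov lam (fR c1) (fR c2) -> qbase lam c1 c2.
Proof.
move=> s1 s2 [_ [_ [hcov [c [sc [tc [ac [lc hs]]]]]]]].
rewrite /= in tc lc hcov hs.
set e0 := rcons c (topc c2).
have se : satch e0.
  rewrite /satch rcons_path; apply/andP; split => //.
  by move: hcov; rewrite -tc.
have w : labs lam (af c1) ++ drop (size c) (labs lam e0) = labs lam e0.
  have e1 : labs lam c = take (size c) (labs lam e0).
    by rewrite -labs_take // /e0 -cats1 take_size_cat.
  by rewrite -lc {1}e1 cat_take_drop.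
exists c, e0; split.
  apply: (fR_fibre s1 sc).1.
  by rewrite /fR (labs_af (c := c)) // tc lc.
split.
  apply: (fR_fibre s2 se).1.
  rewrite /fR {2}/topc /e0 last_rcons; congr pair.
  move: hs; rewrite w => -[hs1 hs2].
  have [he ae] := af_spec se.
  have [hc _] := (rst_nf (simQ_labs he) _).2 (af_nf ae).
  exact: nf_unique hs1 hc hs2 ae.
split => //; split => //.
by move=> z hz; rewrite /e0 -cats1 mem_cat hz.
Qed.

Lemma rle_qle p q : rle lam p q -> forall c1 c2, satch c1 -> satch c2 ->
  fR c1 = p -> fR c2 = q -> qle lam c1 c2.
Proof.
move=> h; elim: (clos_rt_rt1n _ _ _ _ h) => [p0 | p0 z q0 hr _ IH] c1 c2 s1 s2 e1 e2.
  apply: rt_step; exists c2, c2; split.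
    by apply: (fR_fibre s1 s2).1; rewrite e1 e2.
  split; first exact: simQ_refl s2.
  by split => //; split => //; move=> x.
have [_ [iz _]] := hr.
have [cz [sz ez]] := fR_surj iz.
apply: rt_trans (rt_step _ _ _ _ (rcov_qbase s1 sz _)) (IH cz c2 sz s2 ez e2).
by rewrite e1 ez.
Qed.

End Lab.

Theorem theorem4p5 (d : Order.disp_t) (T : finBPOrderType d)
  (dL : Order.disp_t) (L : porderType dL) (lam : seq T -> nat -> L) :
  graded T -> CW_labeling lam -> Q_R_isomorphic lam.
Proof.
move=> _ [[HC _] [HS HD]].
exists (fR lam); split; first exact: isR_fR HC HS.
split; first exact: fR_surj HC HS.
split; first exact: fR_fibre HC HS HD.
move=> c1 c2 s1 s2; split; first by move=> h; exact: (qle_rle HC HS HD h).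
by move=> h; exact: (rle_qle HC HS HD h s1 s2 erefl erefl).
Qed.
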